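(* Let $d\ge 1$ and $k\ge d-1$ be integers. Then every injective function $f\colon S^k\to\mathbb{R}^d$ (not assumed continuous) satisfies $\alpha(f)\ge c_{d-1,k}$.
   Context: For a topological space $X$ and a metric space $Y$, the modulus of discontinuity of a function $g\colon X\to Y$ is $\delta(g)=\inf\{\delta\ge 0 : \text{for every } x\in X \text{ there is an open neighborhood } U_x \text{ of } x \text{ with } \operatorname{diam}(g(U_x))\le\delta\}$. The unit sphere $S^{m}$ carries the geodesic (angle) metric $d(u,v)=\arccos\langle u,v\rangle$. For a topological space $X$, $\mathrm{Conf}_2(X)=\{(x,y)\in X\times X: x\neq y\}$ with the subspace topology. For an injective function $f\colon X\to\mathbb{R}^d$, define $\Phi_f\colon \mathrm{Conf}_2(X)\to S^{d-1}$ by $\Phi_f(x,y)=\frac{f(x)-f(y)}{\|f(x)-f(y)\|}$ and $\alpha(f)=\delta(\Phi_f)$. For a metric space $Y$ and $r\ge 0$, the Vietoris–Rips complex $\mathrm{VR}(Y;r)$ is the simplicial complex with vertex set $Y$ whose simplices are the finite subsets of $Y$ of diameter $\le r$ (considered via its geometric realization). For integers $k\ge n\ge 0$, $c_{n,k}=\inf\{r\ge 0: \text{there exists a continuous map } S^k\to\mathrm{VR}(S^n;r) \text{ commuting with the } \mathbb{Z}/2\text{-actions}\}$, where $\mathbb{Z}/2$ acts antipodally on $S^k$ and on $\mathrm{VR}(S^n;r)$ via the simplicial map induced by the antipodal map of $S^n$. *)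

(* Defs.v *)
From HB Require Import structures.
From mathcomp Require Import all_boot all_order all_algebra.
From mathcomp Require Import all_classical all_reals all_analysis.
Set Implicit Arguments. Unset Strict Implicit. Unset Printing Implicit Defensive.
Import Order.TTheory GRing.Theory Num.Theory.
Import numFieldNormedType.Exports.
Local Open Scope classical_set_scope.
Local Open Scope ring_scope.

Section Defs.
Variable R : realType.

Definition dot (m : nat) (u v : 'rV[R]_m) : R := \sum_(i < m) u 0 i * v 0 i.
Definition enorm (m : nat) (u : 'rV[R]_m) : R := Num.sqrt (dot u u).

(* unit sphere in R^m (so S^n = usph n.+1) *)
Definition usph (m : nat) : set 'rV[R]_m := [set u | dot u u = 1].

Definition gdist (m : nat) (u v : 'rV[R]_m) : R := acos (dot u v).

(* modulus of discontinuity of g : X -> Y, X a subspace of a topological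
   space T, Y with a metric dist; diam(g(U)) <= delta is unfolded as
   "all pairwise distances of points of g(U) are <= delta". Open
   neighbourhoods in the subspace X are the traces O `&` X of open O. *)
Definition moddisc_set (T : topologicalType) (X : set T) (Y : Type)
  (dist : Y -> Y -> R) (g : T -> Y) : set R :=
  [set delta | 0 <= delta /\
     forall x, X x -> exists O : set T, [/\ open O, O x &
       forall p q, O p -> X p -> O q -> X q -> dist (g p) (g q) <= delta]].

Definition moddisc (T : topologicalType) (X : set T) (Y : Type)
  (dist : Y -> Y -> R) (g : T -> Y) : \bar R :=
  ereal_inf [set d%:E | d in moddisc_set X dist g].

Definition conf2 (k : nat) : set ('rV[R]_k.+1 * 'rV[R]_k.+1) :=
  [set p | [/\ usph p.1, usph p.2 & p.1 <> p.2]].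

Definition Phi (k d : nat) (f : 'rV[R]_k.+1 -> 'rV[R]_d)
  (p : 'rV[R]_k.+1 * 'rV[R]_k.+1) : 'rV[R]_d :=
  (enorm (f p.1 - f p.2))^-1 *: (f p.1 - f p.2).

Definition alpha (k d : nat) (f : 'rV[R]_k.+1 -> 'rV[R]_d) : \bar R :=
  moddisc (@conf2 k) (@gdist d) (Phi f).

(* Geometric realization of VR(S^{m-1}; r): points are barycentric
   coordinate functions t : R^m -> R, nonnegative, finitely supported,
   summing to 1, whose support is a simplex (subset of the sphere of
   diameter <= r). *)
Definition vr_real (m : nat) (r : R) : set ('rV[R]_m -> R) :=
  [set t | (forall x, 0 <= t x) /\
     (forall x y, t x != 0 -> t y != 0 -> usph x /\ gdist x y <= r) /\
     exists s : seq 'rV[R]_m, [/\ uniq s, (forall x, t x != 0 -> x \in s) &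
        \sum_(x <- s) t x = 1]].

Definition stdsimplex (n : nat) : set 'rV[R]_n :=
  [set l | (forall i, 0 <= l 0 i) /\ \sum_(i < n) l 0 i = 1].

(* characteristic map of the simplex with (ordered) vertex list s *)
Definition charmap (m : nat) (s : seq 'rV[R]_m) (l : 'rV[R]_(size s))
  : 'rV[R]_m -> R :=
  fun x => \sum_(i < size s | s`_i == x) l 0 i.

Definition vr_simplex (m : nat) (r : R) (s : seq 'rV[R]_m) : Prop :=
  uniq s /\ forall x y, x \in s -> y \in s -> usph x /\ gdist x y <= r.

(* open sets of the realization for the weak (coherent) topology *)
Definition vr_open (m : nat) (r : R) (U : set ('rV[R]_m -> R)) : Prop :=
  U `<=` vr_real r /\
  forall s, vr_simplex r s -> exists O : set 'rV[R]_(size s),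
    open O /\ forall l, stdsimplex l -> (U (charmap l) <-> O l).

Definition vr_cont (k m : nat) (r : R) (g : 'rV[R]_k.+1 -> ('rV[R]_m -> R))
  : Prop :=
  (forall x, usph x -> vr_real r (g x)) /\
  forall U, vr_open r U -> exists O : set 'rV[R]_k.+1,
    open O /\ forall x, usph x -> (U (g x) <-> O x).

(* Z/2-equivariance: antipodal map on S^k, induced simplicial map on VR *)
Definition vr_equiv (k m : nat) (g : 'rV[R]_k.+1 -> ('rV[R]_m -> R)) : Prop :=
  forall x, usph x -> g (- x) = (fun y => g x (- y)).

Definition c_nk (n k : nat) : \bar R :=
  ereal_inf [set r%:E | r in [set r : R | 0 <= r /\
     exists g : 'rV[R]_k.+1 -> ('rV[R]_n.+1 -> R),
       vr_cont r g /\ vr_equiv g]].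

End Defs.

(* Main.v *)
Require Import Defs.
From HB Require Import structures.
From mathcomp Require Import all_boot all_order all_algebra.
From mathcomp Require Import all_classical all_reals all_analysis.
From mathcomp Require Import lra.
Import Order.TTheory GRing.Theory Num.Theory.
Import numFieldNormedType.Exports.
Local Open Scope classical_set_scope.
Local Open Scope ring_scope.
Set Implicit Arguments. Unset Strict Implicit. Unset Printing Implicit Defensive.

Section Basic.
Variable R : realType.

Lemma dotNN m (u v : 'rV[R]_m) : dot (- u) (- v) = dot u v.
Proof. by apply: eq_bigr => i _; rewrite !mxE mulrNN. Qed.

Lemma dotC m (u v : 'rV[R]_m) : dot u v = dot v u.
Proof. by apply: eq_bigr => i _; rewrite mulrC. Qed.

Lemma dotZZ m (a : R) (u : 'rV[R]_m) : dot (a *: u) (a *: u) = a ^+ 2 * dot u u.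
Proof.
rewrite /dot mulr_sumr; apply: eq_bigr => i _; rewrite !mxE; lra.
Qed.

Lemma dot_ge0 m (u : 'rV[R]_m) : 0 <= dot u u.
Proof. by apply: sumr_ge0 => i _; rewrite -expr2 sqr_ge0. Qed.

Lemma dot_eq0 m (u : 'rV[R]_m) : dot u u = 0 -> u = 0.
Proof.
move=> h; apply/rowP => i; rewrite mxE.
have := @psumr_eq0P R _ predT (fun i => u 0 i * u 0 i).
have H : forall j : 'I_m, predT j -> 0 <= u 0 j * u 0 j.
  by move=> j _; rewrite -expr2 sqr_ge0.
move=> /(_ H h i isT) /eqP.
by rewrite mulf_eq0 orbb => /eqP.
Qed.

Lemma enormN m (u : 'rV[R]_m) : enorm (- u) = enorm u.
Proof. by rewrite /enorm dotNN. Qed.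

Lemma gdistNN m (u v : 'rV[R]_m) : gdist (- u) (- v) = gdist u v.
Proof. by rewrite /gdist dotNN. Qed.

Lemma usphN m (u : 'rV[R]_m) : usph u -> usph (- u).
Proof. by rewrite /usph /= dotNN. Qed.

Lemma usph_neq m (u : 'rV[R]_m) : usph u -> u <> - u.
Proof.
move=> hu e; have : u = 0.
  apply/rowP => i; have := congr1 (fun M : 'rV[R]_m => M 0 i) e.
  rewrite /= !mxE; lra.
move=> u0; move: hu; rewrite /usph /= u0 /dot big1.
  by move/esym/eqP; rewrite oner_eq0.
by move=> i _; rewrite mxE mul0r.
Qed.

Lemma PhiSwap k d (f : 'rV[R]_k.+1 -> 'rV[R]_d) a b :
  Phi f (b, a) = - Phi f (a, b).
Proof.
by rewrite /Phi /= -(opprB (f a)) enormN scalerN.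
Qed.

Lemma Phi_usph k d (f : 'rV[R]_k.+1 -> 'rV[R]_d) a b :
  f a <> f b -> usph (Phi f (a, b)).
Proof.
move=> ne; rewrite /usph /Phi /= dotZZ /enorm.
set w := f a - f b.
have w0 : dot w w != 0.
  apply/eqP => /dot_eq0 /eqP; rewrite subr_eq0 => /eqP; exact: ne.
by rewrite exprVn sqr_sqrtr ?dot_ge0 // mulVf.
Qed.

End Basic.



Lemma nbhs_all_seq (T : topologicalType) (A : eqType) (y : T) (s : seq A)
  (Q : A -> set T) : (forall a, a \in s -> nbhs y (Q a)) ->
  nbhs y (fun z => forall a, a \in s -> Q a z).
Proof.
elim: s => [|a s IH] H.
  by apply: filterS (filterT) => z _ a; rewrite in_nil.
have h1 := H a (mem_head a s).
have h2 := IH (fun b hb => H b (mem_behead (s:=a :: s) hb)).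
apply: filterS (filterI h1 h2) => z [hz1 hz2] b.
by rewrite in_cons => /orP[/eqP ->|/hz2].
Qed.

Lemma nbhs_gt (R : realType) (T : topologicalType) (h : T -> R) y a :
  {for y, continuous h} -> a < h y -> nbhs y [set z | a < h z].
Proof.
move=> hc hy; apply: (hc [set r | a < r]).
by apply: open_nbhs_nbhs; split => //; exact: open_gt.
Qed.

Section Construction.
Variables (R : realType) (k m : nat) (V : 'rV[R]_k.+1 -> 'rV[R]_m) (del : R).
Variable L0 : seq ('rV[R]_k.+1 * R).

Definition negp (p : 'rV[R]_k.+1 * R) := (- p.1, p.2).
Let L := L0 ++ map negp L0.

Hypothesis HV1 : forall z, usph z -> usph (V z).
Hypothesis HVN : forall z, V (- z) = - V z.
Hypothesis HL0S : forall p, p \in L0 -> usph p.1.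
Hypothesis HLpos : forall p, p \in L -> 0 < p.2.
Hypothesis HLgood : forall p, p \in L -> forall z z', usph z -> usph z' ->
  `|p.1 - z| < 3 * p.2 -> `|p.1 - z'| < 3 * p.2 -> gdist (V z) (V z') <= del.
Hypothesis Hcov : forall x, usph x -> exists2 p, p \in L & `|p.1 - x| < p.2.

Lemma LS p : p \in L -> usph p.1.
Proof.
rewrite mem_cat => /orP[/HL0S//|/mapP[q /HL0S hq ->]].
exact: usphN.
Qed.

Definition psi (p : 'rV[R]_k.+1 * R) x := Num.max 0 (p.2 - `|p.1 - x|).
Definition Zs x := \sum_(p <- L) psi p x.
Definition num x v := \sum_(p <- L | V p.1 == v) psi p x.
Definition gg x := fun v => num x v / Zs x.

Lemma psi_ge0 p x : 0 <= psi p x.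
Proof. by rewrite /psi le_max lexx. Qed.

Lemma psi_eq0 p x : p.2 <= `|p.1 - x| -> psi p x = 0.
Proof. by move=> h; rewrite /psi max_l // subr_le0. Qed.

Lemma psi_neq0 p x : psi p x != 0 -> `|p.1 - x| < p.2.
Proof.
by case: (ltP (`|p.1 - x|) p.2) => // h; rewrite psi_eq0 ?eqxx.
Qed.

Lemma psi_gt0 p x : `|p.1 - x| < p.2 -> 0 < psi p x.
Proof. by move=> h; rewrite /psi lt_max subr_gt0 h orbT. Qed.

Lemma Zs_ge0 x : 0 <= Zs x.
Proof. by apply: sumr_ge0 => p _; exact: psi_ge0. Qed.

Lemma Zs_gt0 x : usph x -> 0 < Zs x.
Proof.
move=> /Hcov[p hp hpx]; rewrite /Zs (big_rem p hp) /=.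
have h1 := psi_gt0 hpx.
have h2 : 0 <= \sum_(y <- rem p L) psi y x.
  by apply: sumr_ge0 => q _; exact: psi_ge0.
lra.
Qed.

Lemma num_ge0 x v : 0 <= num x v.
Proof. by apply: sumr_ge0 => p _; exact: psi_ge0. Qed.

Lemma num_neq0 x v : num x v != 0 ->
  exists2 p, p \in L & (V p.1 = v /\ psi p x != 0).
Proof.
move=> h; apply: contrapT => hn; move/eqP: h; apply.
rewrite /num big1_seq // => p /andP[/eqP hv hp]; apply: contrapT => hne.
by apply: hn; exists p => //; split => //; exact/eqP.
Qed.

Lemma gg_ge0 x v : 0 < Zs x -> 0 <= gg x v.
Proof. by move=> h; rewrite /gg divr_ge0 ?num_ge0 // ltW. Qed.

Lemma gg_neq0 x v : gg x v != 0 -> num x v != 0.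
Proof. by apply: contra => /eqP h; rewrite /gg h mul0r. Qed.

Lemma sum_gg x s : 0 < Zs x -> uniq s ->
  (forall p, p \in L -> psi p x != 0 -> V p.1 \in s) ->
  \sum_(v <- s) gg x v = 1.
Proof.
move=> hZ us hs; rewrite /gg -mulr_suml.
have -> : \sum_(v <- s) num x v = Zs x.
  rewrite /num; under eq_bigr do rewrite big_mkcond /=.
  rewrite exchange_big /=; apply: eq_big_seq => p hp.
  rewrite -big_mkcond /= -big_filter.
  case: (boolP (V p.1 \in s)) => hin.
    have -> : [seq v <- s | V p.1 == v] = [:: V p.1].
      rewrite -(filter_pred1_uniq us hin); apply: eq_filter => v.
      by rewrite /= eq_sym.
    by rewrite big_seq1.
  have : ~~ (psi p x != 0) by apply: contra (hs p hp) hin.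
  by rewrite negbK => /eqP ->; rewrite big1.
by rewrite mulfV // gt_eqF.
Qed.

Lemma pair_close p q x : p \in L -> q \in L ->
  `|p.1 - x| <= p.2 -> `|q.1 - x| <= q.2 -> gdist (V p.1) (V q.1) <= del.
Proof.
move=> hp hq hpx hqx.
have Sp := LS hp; have Sq := LS hq.
have pp := HLpos hp; have qp := HLpos hq.
have hpq : `|p.1 - q.1| <= p.2 + q.2.
  apply: (le_trans (ler_distD x p.1 q.1)); rewrite (distrC x).
  exact: lerD.
have h0 : forall c : 'rV[R]_k.+1, `|c - c| = 0 by move=> c; rewrite subrr normr0.
case: (leP q.2 p.2) => h.
  apply: (HLgood hp) => //; rewrite ?h0; lra.
apply: (HLgood hq) => //; rewrite ?h0 ?(distrC q.1); lra.
Qed.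

Lemma psiN p x : psi p (- x) = psi (negp p) x.
Proof.
rewrite /psi /=; congr (Num.max 0 (_ - _)).
by rewrite -normrN; congr Num.norm; apply/rowP => i; rewrite !mxE; lra.
Qed.

Lemma psiN' p x : psi (negp p) (- x) = psi p x.
Proof. by rewrite -psiN opprK. Qed.

Lemma gg_equiv x : gg (- x) = fun v => gg x (- v).
Proof.
apply: funext => v; rewrite /gg; congr (_ / _).
  rewrite /num !big_cat !big_map /=.
  under eq_bigr do rewrite psiN.
  under [X in _ + X = _]eq_bigr do rewrite psiN'.
  under [X in _ + X = _]eq_bigl do rewrite HVN eqr_oppLR.
  under [X in _ = _ + X]eq_bigl do rewrite HVN eqr_opp.
  by rewrite addrC.
rewrite /Zs !big_cat !big_map /=.
under eq_bigr do rewrite psiN.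
under [X in _ + X = _]eq_bigr do rewrite psiN'.
by rewrite addrC.
Qed.

Lemma gg_real x : usph x -> vr_real del (gg x).
Proof.
move=> Sx; have hZ := Zs_gt0 Sx.
split; first by move=> v; exact: gg_ge0.
split.
  move=> u w /gg_neq0/num_neq0[p hp [<- hp0]] /gg_neq0/num_neq0[q hq [<- hq0]].
  split; first exact: HV1 (LS hp).
  exact: (pair_close hp hq (ltW (psi_neq0 hp0)) (ltW (psi_neq0 hq0))).
exists (undup [seq V p.1 | p <- L]); split.
- exact: undup_uniq.
- move=> v /gg_neq0/num_neq0[p hp [<- _]].
  by rewrite mem_undup; apply: map_f.
- apply: sum_gg => //; first exact: undup_uniq.
  by move=> p hp _; rewrite mem_undup; apply: map_f.
Qed.

Lemma dist_cont (c : 'rV[R]_k.+1) (a : R) x :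
  {for x, continuous (fun x1 : 'rV[R]_k.+1 => (a - `|c - x1| : R^o))}.
Proof.
have h0 : {for x, continuous (fun x1 : 'rV[R]_k.+1 => c - x1)}.
  apply: continuousB; [exact: cst_continuous | exact: cvg_id].
have h1 : {for x, continuous (fun x1 : 'rV[R]_k.+1 => `|c - x1|)}.
  exact: (continuous_comp h0 (@norm_continuous _ _ _)).
have h2 : {for x, continuous (fun=> (a : R^o))} by exact: cst_continuous.
have := @continuousB R R^o 'rV[R]_k.+1 (fun=> a) (fun x1 : 'rV[R]_k.+1 => `|c - x1|) x h2 h1.
exact.
Qed.

Lemma psi_cont p : continuous (psi p).
Proof.
have -> : psi p = (fun _ => (0:R^o)) \max (fun x => (p.2 - `|p.1 - x| : R^o)).
  by apply: funext => z.
move=> x; apply: continuous_max.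
  exact: cst_continuous.
exact: dist_cont.
Qed.

Lemma Zs_cont : continuous Zs.
Proof.
rewrite /Zs; apply: continuous_big; first exact: add_continuous.
by move=> p _; exact: psi_cont.
Qed.

Lemma num_cont v : continuous (fun x => num x v).
Proof.
rewrite /num; apply: continuous_big; first exact: add_continuous.
by move=> p _; exact: psi_cont.
Qed.

Lemma gg_cont v y : Zs y != 0 -> {for y, continuous (fun x => gg x v)}.
Proof.
move=> hZ; rewrite /gg; apply: continuousM; first exact: num_cont.
by apply: continuousV => //; exact: Zs_cont.
Qed.

Definition sx x := undup [seq V p.1 | p <- L & `|p.1 - x| <= p.2].
Definition Nx x y := 0 < Zs y /\
  forall p, p \in L -> p.2 < `|p.1 - x| -> p.2 < `|p.1 - y|.
Definition lrow x y : 'rV[R]_(size (sx x)) :=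
  \row_(j < size (sx x)) gg y (sx x)`_j.

Lemma sx_simplex x : vr_simplex del (sx x).
Proof.
split; first exact: undup_uniq.
move=> u w; rewrite !mem_undup => /mapP[p + ->] /mapP[q + ->].
rewrite !mem_filter => /andP[hp1 hp2] /andP[hq1 hq2].
split; first exact: HV1 (LS hp2).
exact: (pair_close hp2 hq2 hp1 hq1).
Qed.

Lemma Nx_self x : usph x -> Nx x x.
Proof. by move=> Sx; split => //; exact: Zs_gt0. Qed.

Lemma supp_sx x y p : Nx x y -> p \in L -> psi p y != 0 -> V p.1 \in sx x.
Proof.
move=> [_ hN] hp /psi_neq0 hy.
rewrite mem_undup; apply: map_f; rewrite mem_filter hp andbT.
rewrite leNgt; apply/negP => hx.
by have := hN p hp hx; rewrite ltNge (ltW hy).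
Qed.

Lemma gg_out x y v : Nx x y -> v \notin sx x -> gg y v = 0.
Proof.
move=> hN hv; rewrite /gg /num big1_seq ?mul0r // => p /andP[/eqP hV hp].
apply/eqP; apply: contraNT hv => hne; rewrite -hV.
exact: (supp_sx hN hp hne).
Qed.

Lemma charmap_eq x y : Nx x y -> gg y = charmap (lrow x y).
Proof.
move=> hN; apply: funext => v; rewrite /charmap.
under eq_bigr do rewrite mxE.
have -> : \sum_(i < size (sx x) | (sx x)`_i == v) gg y (sx x)`_i =
          \sum_(w <- sx x | w == v) gg y w by rewrite (big_nth 0) big_mkord.
rewrite -big_filter.
case: (boolP (v \in sx x)) => hin.
  by rewrite (filter_pred1_uniq (undup_uniq _) hin) big_seq1.
rewrite (gg_out hN hin) big1_seq // => w /andP[_].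
rewrite mem_filter => /andP[/eqP -> hw].
by rewrite hw in hin.
Qed.

Lemma lrow_simplex x y : Nx x y -> stdsimplex (lrow x y).
Proof.
move=> hN; have hZ := hN.1; split.
  by move=> i; rewrite mxE; exact: gg_ge0.
under eq_bigr do rewrite mxE.
transitivity (\sum_(w <- sx x) gg y w); first by rewrite (big_nth 0) big_mkord.
apply: sum_gg => //; first exact: undup_uniq.
by move=> p hp hne; exact: (supp_sx hN hp hne).
Qed.

Lemma lrow_cont x y : Nx x y -> {for y, continuous (lrow x)}.
Proof.
move=> hN.
have e : lrow x = fun z => \sum_(j < size (sx x)) gg z (sx x)`_j *: 'e_j.
  apply: funext => z; rewrite {1}[lrow x z]row_sum_delta.
  by apply: eq_bigr => j _; rewrite mxE.
rewrite e; apply: cvg_big; first exact: add_continuous.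
  exact: nbhs_filter.
move=> j _.
have hZ : Zs y != 0 by rewrite gt_eqF //; exact: hN.1.
have := @continuousZr_tmp R 'rV[R]_(size (sx x)) 'rV[R]_k.+1
  (fun z => gg z (sx x)`_j) 'e_j y (gg_cont (v:=(sx x)`_j) hZ).
exact.
Qed.


Lemma Nx_nbhs x y : Nx x y -> nbhs y (Nx x).
Proof.
move=> [hZ hN].
have h1 : nbhs y [set z | 0 < Zs z] by apply: nbhs_gt => //; exact: Zs_cont.
have h2 : nbhs y (fun z => forall p, p \in L ->
    p.2 < `|p.1 - x| -> p.2 < `|p.1 - z|).
  apply: nbhs_all_seq => p hp.
  case: (ltP p.2 `|p.1 - x|) => hpx.
    have h3 : nbhs y [set z | 0 < (p.2 - `|p.1 - z| : R^o) * -1].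
      apply: nbhs_gt.
        apply: continuousM; first exact: dist_cont.
        exact: cst_continuous.
      by have := hN p hp hpx; lra.
    by apply: filterS h3 => z /= hz _; lra.
  by apply: filterS filterT => z _ hz; lra.
by apply: filterS (filterI h1 h2) => z [].
Qed.

Lemma gg_vr_cont : vr_cont del gg.
Proof.
split; first exact: gg_real.
move=> U [hsub hsim].
exists [set y | exists x, usph x /\ exists Ox : set 'rV[R]_(size (sx x)),
  [/\ open Ox, (forall l, stdsimplex l -> (U (charmap l) <-> Ox l)), Nx x y
    & Ox (lrow x y)]].
split.
  rewrite openE => y [x [Sx [Ox [oO hO hN hOl]]]].
  have h1 := Nx_nbhs hN.
  have h2 : nbhs y (lrow x @^-1` Ox).
    apply: (lrow_cont hN).
    by apply: open_nbhs_nbhs; split.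
  apply: filterS (filterI h1 h2) => z [hz1 hz2].
  by exists x; split => //; exists Ox; split.
move=> y Sy; split.
  move=> hUy; have [Ox [oO hO]] := hsim _ (sx_simplex y).
  have hN := Nx_self Sy.
  exists y; split => //; exists Ox; split => //.
  apply/hO; first exact: lrow_simplex.
  by rewrite -charmap_eq.
move=> [x [Sx [Ox [oO hO hN hOl]]]].
rewrite (charmap_eq hN); apply/hO => //.
exact: lrow_simplex.
Qed.

Lemma gg_vr_equiv : vr_equiv gg.
Proof. by move=> x _; exact: gg_equiv. Qed.

End Construction.


Section Sphere.
Variable R : realType.

Lemma usph_norm n (x : 'rV[R]_n) : usph x -> `|x| <= 1.
Proof.
move=> hx; rewrite [leLHS]/Num.Def.normr /= mx_normrE.
apply: bigmax_le => // -[i j] _ /=; rewrite ord1.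
have : x 0 j * x 0 j <= 1.
  rewrite -hx /dot (bigD1 j) //= lerDl.
  by apply: sumr_ge0 => i0 _; rewrite -expr2 sqr_ge0.
rewrite ler_norml => h; apply/andP; split; nra.
Qed.

Lemma usph_compact n : compact (@usph R n.+1).
Proof.
apply: bounded_closed_compact.
  exists 1; split; first by rewrite num_real.
  move=> M hM x hx; apply: (le_trans (usph_norm hx)); exact: ltW.
have -> : @usph R n.+1 = (fun u => dot u u) @^-1` [set x | x = 1] by [].
apply: preimage_closed; last exact: closed_eq.
move=> u _; apply: continuous_big; first exact: add_continuous.
move=> i _ v; apply: (@continuousM R _ (fun u : 'rV[R]_n.+1 => u 0 i) (fun u => u 0 i)); exact: coord_continuous.
Qed.

End Sphere.

Section Main.
Variables (R : realType) (k d : nat) (f : 'rV[R]_k.+1 -> 'rV[R]_d).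
Hypothesis finj : forall x y, usph x -> usph y -> f x = f y -> x = y.
Variable del : R.
Hypothesis hdel : moddisc_set (@conf2 R k) (@gdist R d) (Phi f) del.

Definition VV (z : 'rV[R]_k.+1) := Phi f (z, - z).

Lemma VV1 z : usph z -> usph (VV z).
Proof.
move=> hz; apply: Phi_usph => /= e.
by apply: (usph_neq hz); apply: finj => //; exact: usphN.
Qed.

Lemma VVN z : VV (- z) = - VV z.
Proof. by rewrite /VV opprK PhiSwap. Qed.

Lemma stepA y : usph y -> exists2 e, 0 < e & forall z z', usph z -> usph z' ->
  `|y - z| < e -> `|y - z'| < e -> gdist (VV z) (VV z') <= del.
Proof.
move=> hy; have [_ /(_ (y, - y))] := hdel.
case.
  by split => //=; [exact: usphN | exact: usph_neq].
move=> O [oO Oy HO].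
have hc : (fun z : 'rV[R]_k.+1 => (z, - z)) @ y --> (y, - y).
  exact: (cvg_pair cvg_id (cvgN cvg_id)).
have : nbhs y [set z | O (z, - z)].
  by apply: hc; apply: open_nbhs_nbhs; split.
move=> /nbhs_ballP[e e0 he]; exists e => // z z' hz hz' hyz hyz'.
have hO : forall w, usph w -> `|y - w| < e -> O (w, - w) /\ conf2 (w, - w).
  move=> w hw hyw; split.
    by apply: he; rewrite -ball_normE.
  by split => //=; [exact: usphN | exact: usph_neq].
have [h1 h2] := hO z hz hyz; have [h3 h4] := hO z' hz' hyz'.
exact: HO.
Qed.

Lemma normNB (a b : 'rV[R]_k.+1) : `|- a - b| = `|a - - b|.
Proof. by rewrite -normrN; congr Num.norm; apply/rowP => i; rewrite !mxE; lra. Qed.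

Lemma exists_g : exists g : 'rV[R]_k.+1 -> ('rV[R]_d -> R),
  vr_cont del g /\ vr_equiv g.
Proof.
have hA : forall y, exists e, usph y -> 0 < e /\ (forall z z', usph z -> usph z' ->
  `|y - z| < e -> `|y - z'| < e -> gdist (VV z) (VV z') <= del).
  move=> y; case: (pselect (usph y)) => hy; last by exists 1.
  by have [e e0 he] := stepA hy; exists e.
have [eps heps] := choice hA.
have hcomp := @usph_compact R k.
rewrite compact_cover in hcomp.
have [D' sub cov] : finite_subset_cover (@usph R k.+1) (fun y => ball y (eps y / 3)) (@usph R k.+1).
  apply: hcomp; first by move=> i _; exact: ball_open.
  move=> x hx; exists x => //.
  apply: ballxx; rewrite divr_gt0 //; exact: (heps x hx).1.
have subS : forall y, y \in finmap.enum_fset D' -> usph y.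
  by move=> y hy; have := sub y hy; rewrite inE.
set L0 := [seq (y, eps y / 3) | y <- finmap.enum_fset D'].
have hL0S : forall p, p \in L0 -> usph p.1.
  by move=> p /mapP[y hy ->] /=; exact: subS.
have hL : forall p, p \in L0 ++ [seq negp q | q <- L0] ->
    exists2 y, usph y & (p = (y, eps y / 3) \/ p = (- y, eps y / 3)).
  move=> p; rewrite mem_cat => /orP[/mapP[y hy ->]|/mapP[q /mapP[y hy ->] ->]].
    by exists y; [exact: subS | left].
  by exists y; [exact: subS | right].
have hLpos : forall p, p \in L0 ++ [seq negp q | q <- L0] -> 0 < p.2.
  move=> p /hL[y Sy [->|->]] /=; have := (heps y Sy).1 => h; lra.
have hLgood : forall p, p \in L0 ++ [seq negp q | q <- L0] -> forall z z',
    usph z -> usph z' -> `|p.1 - z| < 3 * p.2 -> `|p.1 - z'| < 3 * p.2 ->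
    gdist (VV z) (VV z') <= del.
  move=> p /hL[y Sy [->|->]] /= z z' hz hz'.
    have e3 : 3 * (eps y / 3) = eps y by lra.
    rewrite e3; exact: (heps y Sy).2.
  have e3 : 3 * (eps y / 3) = eps y by lra.
  rewrite e3 !normNB => h1 h2.
  have e1 : forall w, VV w = - VV (- w) by move=> w; rewrite VVN opprK.
  rewrite (e1 z) (e1 z') gdistNN.
  by apply: (heps y Sy).2 => //; exact: usphN.
have hcov : forall x, usph x -> exists2 p, p \in L0 ++ [seq negp q | q <- L0] &
    `|p.1 - x| < p.2.
  move=> x hx; have [y hy hb] := cov x hx.
  exists (y, eps y / 3).
    by rewrite mem_cat; apply/orP; left; apply: map_f.
  by move: hb; rewrite -ball_normE.
exists (gg VV L0); split.
  exact: (gg_vr_cont VV1 hL0S hLpos hLgood hcov).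
exact: (gg_vr_equiv L0 VVN).
Qed.

End Main.

Unset Implicit Arguments.

Theorem theorem1p2 (R : realType) (d k : nat) :
  (1 <= d)%N -> (d.-1 <= k)%N ->
  forall f : 'rV[R]_k.+1 -> 'rV[R]_d,
    (forall x y, usph x -> usph y -> f x = f y -> x = y) ->
    (c_nk R d.-1 k <= alpha f)%E.
Proof.
case: d => [//|d] _ _ f finj.
rewrite /alpha /moddisc; apply/ereal_infP => _ [del hdel <-].
apply: ereal_inf_lbound; exists del => //; split; first exact: hdel.1.
exact: (exists_g finj hdel).
Qed.
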